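(* Let $\Delta$ be an irreducible reduced root system with set of positive roots $\Delta^+$, and let $\eta_1,\eta_2\in\Delta^+$. Partially order $\Delta^+$ by $\mu\preccurlyeq\nu$ iff $\nu-\mu$ is a non-negative integral linear combination of simple roots, and denote by $\eta_1\vee\eta_2$ the least upper bound of $\eta_1,\eta_2$ in $(\Delta^+,\preccurlyeq)$ (which always exists), and by $\eta_1\wedge\eta_2$ their greatest lower bound in $(\Delta^+,\preccurlyeq)$ when it exists. (i) If $\eta_1\vee\eta_2$ covers both $\eta_1$ and $\eta_2$, then either $\eta_1\vee\eta_2=\alpha+\beta=\eta_1+\eta_2$ for some simple roots $\alpha,\beta$ that are adjacent in the Dynkin diagram, or $\eta_1\wedge\eta_2$ exists and $\eta_1$ and $\eta_2$ both cover $\eta_1\wedge\eta_2$. (ii) If $\eta_1\wedge\eta_2$ exists and $\eta_1$ and $\eta_2$ both cover $\eta_1\wedge\eta_2$, then $\eta_1\vee\eta_2$ covers both $\eta_1$ and $\eta_2$.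
   Context: ''$x$ covers $y$'' means $y\prec x$ and there is no $z$ with $y\prec z\prec x$ in $(\Delta^+,\preccurlyeq)$. The greatest lower bound (meet) $\nu=\eta_1\wedge\eta_2$, if it exists, is a positive root with $\eta_1\succcurlyeq\nu$, $\eta_2\succcurlyeq\nu$, and such that $\eta_1\succcurlyeq\kappa$, $\eta_2\succcurlyeq\kappa$ imply $\nu\succcurlyeq\kappa$ for every $\kappa\in\Delta^+$. *)

(* Defs.v *)
From HB Require Import structures.
From mathcomp Require Import all_boot all_order all_algebra.
From mathcomp Require Import reals.
Set Implicit Arguments. Unset Strict Implicit. Unset Printing Implicit Defensive.
Import Order.TTheory GRing.Theory Num.Theory.
Local Open Scope ring_scope.

Section RootSystems.
Variables (R : realType) (n : nat).
Implicit Types (Phi : seq 'rV[R]_n) (simple : 'I_n -> 'rV[R]_n).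

Definition dot (u v : 'rV[R]_n) : R := (u *m v^T) 0 0.

Definition cartan (b a : 'rV[R]_n) : R := 2 * dot b a / dot a a.

Definition reduced_root_system Phi : Prop :=
  uniq Phi /\
  [/\ 0 \notin Phi,
      (forall v : 'rV[R]_n, exists c : 'I_(size Phi) -> R,
          v = \sum_(i < size Phi) c i *: Phi`_i),
      (forall a b, a \in Phi -> b \in Phi -> b - cartan b a *: a \in Phi),
      (forall a b, a \in Phi -> b \in Phi -> exists z : int, cartan b a = z%:~R)
    & (forall a (c : R), a \in Phi -> c *: a \in Phi -> c = 1 \/ c = -1)].

Definition irreducible_rs Phi : Prop :=
  forall P : pred 'rV[R]_n,
    (exists2 a, a \in Phi & P a) -> (exists2 b, b \in Phi & ~~ P b) ->
    exists a b, [/\ a \in Phi, b \in Phi, P a, ~~ P b & dot a b != 0].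

Definition is_base Phi simple : Prop :=
  [/\ forall i, simple i \in Phi,
      (forall c : 'I_n -> R, \sum_i c i *: simple i = 0 -> forall i, c i = 0)
    & (forall b, b \in Phi -> exists c : 'I_n -> int,
          b = \sum_i (c i)%:~R *: simple i /\
          ((forall i, 0 <= c i) \/ (forall i, c i <= 0)))].

Definition nonneg_comb simple (v : 'rV[R]_n) : Prop :=
  exists c : 'I_n -> nat, v = \sum_i (c i)%:R *: simple i.

Definition pos_root Phi simple (b : 'rV[R]_n) : Prop :=
  b \in Phi /\ nonneg_comb simple b.

Definition rle simple (mu nu : 'rV[R]_n) : Prop := nonneg_comb simple (nu - mu).
Definition rlt simple (mu nu : 'rV[R]_n) : Prop := rle simple mu nu /\ mu <> nu.

Definition covers Phi simple (x y : 'rV[R]_n) : Prop :=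
  [/\ pos_root Phi simple x, pos_root Phi simple y, rlt simple y x
    & ~ exists z, [/\ pos_root Phi simple z, rlt simple y z & rlt simple z x]].

Definition is_join Phi simple (e1 e2 j : 'rV[R]_n) : Prop :=
  [/\ pos_root Phi simple j, rle simple e1 j, rle simple e2 j
    & forall k, pos_root Phi simple k -> rle simple e1 k -> rle simple e2 k ->
        rle simple j k].

Definition is_meet Phi simple (e1 e2 m : 'rV[R]_n) : Prop :=
  [/\ pos_root Phi simple m, rle simple m e1, rle simple m e2
    & forall k, pos_root Phi simple k -> rle simple k e1 -> rle simple k e2 ->
        rle simple k m].

Definition adjacent simple (i k : 'I_n) : Prop :=
  i != k /\ dot (simple i) (simple k) != 0.

End RootSystems.

(* Main.v *)
Require Import Defs.
From HB Require Import structures.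
From mathcomp Require Import all_boot all_order all_algebra.
From mathcomp Require Import reals.
From mathcomp Require Import ring lra zify.
Set Implicit Arguments. Unset Strict Implicit.
Import Order.TTheory GRing.Theory Num.Theory.
Local Open Scope ring_scope.

Section Aux.
Variables (R : realType) (n : nat).

Lemma dotE (u v : 'rV[R]_n) : dot u v = \sum_j u 0 j * v 0 j.
Proof. by rewrite /dot !mxE; apply: eq_bigr => j _; rewrite mxE. Qed.

Lemma dotC (u v : 'rV[R]_n) : dot u v = dot v u.
Proof. by rewrite !dotE; apply: eq_bigr => j _; rewrite mulrC. Qed.

Lemma dotDl (u v w : 'rV[R]_n) : dot (u + v) w = dot u w + dot v w.
Proof. by rewrite !dotE -big_split; apply: eq_bigr => j _; rewrite mxE mulrDl. Qed.

Lemma dotNl (u w : 'rV[R]_n) : dot (- u) w = - dot u w.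
Proof. by rewrite !dotE -sumrN; apply: eq_bigr => j _; rewrite mxE mulNr. Qed.

Lemma dotZl (c : R) (u w : 'rV[R]_n) : dot (c *: u) w = c * dot u w.
Proof. by rewrite !dotE mulr_sumr; apply: eq_bigr => j _; rewrite mxE mulrA. Qed.

Lemma dotBl (u v w : 'rV[R]_n) : dot (u - v) w = dot u w - dot v w.
Proof. by rewrite dotDl dotNl. Qed.

Lemma dotDr (u v w : 'rV[R]_n) : dot w (u + v) = dot w u + dot w v.
Proof. by rewrite dotC dotDl !(dotC w). Qed.

Lemma dotBr (u v w : 'rV[R]_n) : dot w (u - v) = dot w u - dot w v.
Proof. by rewrite dotC dotBl !(dotC w). Qed.

Lemma dotNr (u w : 'rV[R]_n) : dot w (- u) = - dot w u.
Proof. by rewrite dotC dotNl dotC. Qed.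

Lemma dotZr (c : R) (u w : 'rV[R]_n) : dot w (c *: u) = c * dot w u.
Proof. by rewrite dotC dotZl dotC. Qed.

Lemma dot_sumr (I : finType) (u : 'rV[R]_n) (f : I -> 'rV[R]_n) :
  dot u (\sum_i f i) = \sum_i dot u (f i).
Proof.
rewrite dotE; under eq_bigr do rewrite summxE mulr_sumr.
rewrite exchange_big /=; apply: eq_bigr => i _; by rewrite dotE.
Qed.

Lemma dot_ge0 (v : 'rV[R]_n) : 0 <= dot v v.
Proof. by rewrite dotE; apply: sumr_ge0 => j _; rewrite -expr2 sqr_ge0. Qed.

Lemma dot_eq0 (v : 'rV[R]_n) : dot v v = 0 -> v = 0.
Proof.
have H0 : forall j, 0 <= v 0 j * v 0 j by move=> j; rewrite -expr2 sqr_ge0.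
rewrite dotE => /psumr_eq0P H; apply/rowP => j; rewrite mxE.
have /eqP := H (fun i _ => H0 i) j isT.
by rewrite mulf_eq0 orbb => /eqP.
Qed.

Variables (Phi : seq 'rV[R]_n) (s : 'I_n -> 'rV[R]_n).
Hypotheses (HR : reduced_root_system Phi) (HB : is_base Phi s).

Lemma Phi_neq0 v : v \in Phi -> v <> 0.
Proof. by case: HR => _ [H0 _ _ _ _] Hv Hv0; move: H0; rewrite -Hv0 Hv. Qed.

Lemma dot_gt0 v : v \in Phi -> 0 < dot v v.
Proof.
move=> Hv; rewrite lt_def dot_ge0 andbT; apply/eqP => /dot_eq0; exact: Phi_neq0.
Qed.

Lemma refl_Phi a b : a \in Phi -> b \in Phi -> b - cartan b a *: a \in Phi.
Proof. by case: HR => _ [_ _ H _ _]; apply: H. Qed.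

Lemma int_Phi a b : a \in Phi -> b \in Phi -> exists z : int, cartan b a = z%:~R.
Proof. by case: HR => _ [_ _ _ H _]; apply: H. Qed.

Lemma reduced_Phi a (c : R) : a \in Phi -> c *: a \in Phi -> c = 1 \/ c = -1.
Proof. by case: HR => _ [_ _ _ _ H]; apply: H. Qed.

Lemma neg_Phi a : a \in Phi -> - a \in Phi.
Proof.
move=> Ha; have := refl_Phi Ha Ha.
rewrite /cartan mulfK; last by apply/eqP => E; move: (dot_gt0 Ha); rewrite E ltxx.
by rewrite scalerDl scale1r opprD addrA subrr add0r.
Qed.

Lemma K_Phi a b : a \in Phi -> b \in Phi -> 0 < dot a b -> a != b -> a - b \in Phi.
Proof.
move=> Ha Hb Hab Hne.
have Pa := dot_gt0 Ha; have Pb := dot_gt0 Hb.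
have [z1 Hz1] := int_Phi Hb Ha.
have [z2 Hz2] := int_Phi Ha Hb.
have C1 : 0 < cartan a b by rewrite /cartan divr_gt0 // mulr_gt0.
have C2 : 0 < cartan b a by rewrite /cartan divr_gt0 // mulr_gt0 // dotC.
have [E1|N1] := eqVneq z1 1.
  by have := refl_Phi Hb Ha; rewrite Hz1 E1 scale1r.
have [E2|N2] := eqVneq z2 1.
  by have := neg_Phi (refl_Phi Ha Hb); rewrite Hz2 E2 scale1r opprB.
exfalso.
have G1 : 2 <= cartan a b.
  rewrite Hz1 -[2]/((2%:~R : R)) ler_int.
  move: C1; rewrite Hz1 -[0]/((0%:~R : R)) ltr_int; lia.
have G2 : 2 <= cartan b a.
  rewrite Hz2 -[2]/((2%:~R : R)) ler_int.
  move: C2; rewrite Hz2 -[0]/((0%:~R : R)) ltr_int; lia.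
move: G1 G2; rewrite /cartan !ler_pdivlMr // => G1 G2.
have : dot (a - b) (a - b) <= 0.
  rewrite (dotC b a) in G2; rewrite !dotBl !dotBr (dotC b a); lra.
move=> H; move/eqP: Hne; apply; apply/eqP; rewrite -subr_eq0; apply/eqP.
apply: dot_eq0; apply/eqP; rewrite eq_le H dot_ge0.
by [].
Qed.

Lemma Kp_Phi a b : a \in Phi -> b \in Phi -> dot a b < 0 -> a != - b -> a + b \in Phi.
Proof.
move=> Ha Hb H Hne; rewrite -[b]opprK; apply: K_Phi => //; first exact: neg_Phi.
by rewrite dotNr oppr_gt0.
Qed.


Definition comb (c : 'I_n -> R) := \sum_i c i *: s i.
Definition cn (c : 'I_n -> nat) := comb (fun i => (c i)%:R).

Lemma combB c d : comb c - comb d = comb (fun i => c i - d i).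
Proof. by rewrite /comb -sumrB; apply: eq_bigr => i _; rewrite scalerBl. Qed.

Lemma combD c d : comb c + comb d = comb (fun i => c i + d i).
Proof. by rewrite /comb -big_split; apply: eq_bigr => i _; rewrite scalerDl. Qed.

Lemma comb0 : comb (fun _ => 0) = 0.
Proof. by rewrite /comb big1 // => i _; rewrite scale0r. Qed.

Lemma comb_inj c d : comb c = comb d -> forall i, c i = d i.
Proof.
move=> E i; apply/eqP; rewrite -subr_eq0; apply/eqP.
have X := combB c d; rewrite E subrr in X.
case: HB => _ H _; exact: (H (fun i => c i - d i) (esym X)).
Qed.

Lemma simpleE k : s k = comb (fun i => (i == k)%:R).
Proof.
rewrite /comb (bigD1 k) //= eqxx scale1r big1 ?addr0 // => i /negPf ->.
by rewrite scale0r.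
Qed.

Lemma cn_simple k : cn (fun i => (i == k : nat)) = s k.
Proof. by rewrite simpleE. Qed.

Lemma cnD a b : cn (fun i => (a i + b i)%N) = cn a + cn b.
Proof. by rewrite /cn combD; apply: eq_bigr => i _; rewrite natrD. Qed.

Lemma cn0 : cn (fun _ => 0%N) = 0.
Proof. exact: comb0. Qed.

Lemma cn_inj a b : cn a = cn b -> forall i, a i = b i.
Proof. by move=> /comb_inj E i; apply/eqP; rewrite -(eqr_nat R) E. Qed.

Lemma simple_Phi k : s k \in Phi.
Proof. by case: HB. Qed.

Lemma root_sign v c : v \in Phi -> v = comb c ->
  (forall i, 0 <= c i) \/ (forall i, c i <= 0).
Proof.
case: HB => _ _ H Hv E; have [z [Ez Hz]] := H v Hv.
have Ec := comb_inj (esym (etrans (esym E) Ez)).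
case: Hz => Hz; [left|right] => i; rewrite -Ec.
  by rewrite -[0]/((0%:~R : R)) ler_int.
by rewrite -[0]/((0%:~R : R)) ler_int.
Qed.

Lemma diff_simple_notin i k : i != k -> s i - s k \notin Phi.
Proof.
move=> Hik; apply/negP => H.
have := root_sign H (etrans (congr2 (fun x y => x - y) (simpleE i) (simpleE k)) (combB _ _)).
case=> [/(_ k)|/(_ i)]; rewrite eqxx ?(negPf Hik) 1?eq_sym ?(negPf Hik) /=.
  by rewrite sub0r oppr_ge0 ler10.
by rewrite subr0 ler10.
Qed.

Lemma dot_simple_le0 i k : i != k -> dot (s i) (s k) <= 0.
Proof.
move=> Hik; rewrite leNgt; apply/negP => H.
have := K_Phi (simple_Phi i) (simple_Phi k) H.
have -> : s i != s k.
  apply/eqP => E; have := comb_inj (etrans (esym (simpleE i)) (etrans E (simpleE k))) i.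
  by rewrite eqxx (negPf Hik) => /eqP; rewrite oner_eq0.
by move=> /(_ isT); apply/negP; exact: diff_simple_notin.
Qed.

Lemma cn_neq_neg c k : cn c <> - s k.
Proof.
move=> E; have : cn c + s k = comb (fun _ => 0) by rewrite comb0 E addNr.
rewrite simpleE /cn combD => /comb_inj /(_ k); rewrite eqxx.
by move/eqP; rewrite paddr_eq0 // ?ler0n // oner_eq0 andbF.
Qed.

Lemma two_cover v a b i k : i != k -> v + s k = cn a -> v + s i = cn b ->
  exists d, v = cn d.
Proof.
move=> Hik Ea Eb.
have Va : v = comb (fun l => (a l)%:R - (l == k)%:R).
  by rewrite -combB -simpleE; apply: (canRL (addrK _)); rewrite Ea.
have Vb : v = comb (fun l => (b l)%:R - (l == i)%:R).
  by rewrite -combB -simpleE; apply: (canRL (addrK _)); rewrite Eb.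
have E := comb_inj (etrans (esym Va) Vb).
exists (fun l => if l == k then b l else a l).
rewrite Va /cn /comb; apply: eq_bigr => l _.
case: eqP => [->|Hl]; last by rewrite subr0.
have Hki : (k == i) = false by rewrite eq_sym (negPf Hik).
by have := E k; rewrite eqxx Hki subr0 => ->.
Qed.


Lemma nncI v c : v = cn c -> nonneg_comb s v.
Proof. by move=> ->; exists c. Qed.

Lemma cn_ext a b : (forall i, a i = b i) -> cn a = cn b.
Proof. by move=> E; rewrite /cn /comb; apply: eq_bigr => i _; rewrite E. Qed.

Lemma cn_zero a : (forall l, a l = 0%N) -> cn a = 0.
Proof. by move=> E; rewrite (cn_ext E) cn0. Qed.

Lemma cnB1 c k : (0 < c k)%N -> cn (fun l => c l - (l == k))%N = cn c - s k.
Proof.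
move=> Hc; apply: (canRL (addrK _)); rewrite -cn_simple -cnD; apply: cn_ext => l.
by rewrite subnK //; case: eqP => [->|] //.
Qed.

Lemma simple_neq0 k : s k <> 0.
Proof. exact: Phi_neq0 (simple_Phi k). Qed.

Lemma simple_cover x y k : pos_root Phi s x -> pos_root Phi s y -> x = y + s k ->
  covers Phi s x y.
Proof.
move=> Px Py E; split=> //.
  split; first by exists (fun i => (i == k : nat)); rewrite E addrAC subrr add0r -cn_simple.
  by move=> Eyx; apply: (@simple_neq0 k); apply: (addrI y); rewrite addr0 -E Eyx.
move=> [z [Pz [[a Ea] Nyz] [[b Eb] Nzx]]].
have Ea' : z - y = cn a := Ea. have Eb' : x - z = cn b := Eb.
have : cn (fun l => a l + b l)%N = cn (fun l => (l == k : nat)).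
  by rewrite cnD -Ea' -Eb' cn_simple addrC addrA subrK E addrAC subrr add0r.
move/cn_inj => H.
have [Ak|Ak] := eqVneq (a k) 0%N.
  apply: Nyz; apply/eqP; rewrite eq_sym -subr_eq0 Ea' cn_zero // => l.
  case: (eqVneq l k) => [->//|Nl]; have := H l; rewrite (negPf Nl).
  by move/eqP; rewrite addn_eq0 => /andP [/eqP].
apply: Nzx; apply/eqP; rewrite eq_sym -subr_eq0 Eb' cn_zero // => l.
case: (eqVneq l k) => [->|Nl].
  by have := H k; rewrite eqxx; move: Ak; case: (a k) => // [[|m]] _ //=; lia.
have := H l; rewrite (negPf Nl).
by move/eqP; rewrite addn_eq0 => /andP [_ /eqP].
Qed.

Lemma cover_simple x y : covers Phi s x y -> exists k, x = y + s k.
Proof.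
move=> [[Hx [cx Ex]] [Hy [cy Ey]] [[c Ec] Nyx] Nz].
have Ec' : x - y = cn c := Ec. have Ey' : y = cn cy := Ey.
have Hd0 : 0 < dot (x - y) (x - y).
  rewrite lt_def dot_ge0 andbT; apply/eqP => /dot_eq0 /eqP.
  by rewrite subr_eq0 => /eqP Exy; apply: Nyx.
have Hsum : dot (x - y) (x - y) = \sum_i (c i)%:R * dot (x - y) (s i).
  by rewrite {2}Ec' /cn /comb dot_sumr; apply: eq_bigr => i _; rewrite dotZr.
have [i Hi] : exists i, 0 < (c i)%:R * dot (x - y) (s i).
  case: (pickP (fun i => 0 < (c i)%:R * dot (x - y) (s i))) => [i Hi|H0].
    by exists i.
  exfalso; move: Hd0; rewrite Hsum; apply/negP; rewrite -leNgt.
  by apply: sumr_le0 => i _; rewrite leNgt H0.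
have ci : (0 < c i)%N by move: Hi; case: (c i) => //; rewrite mul0r ltxx.
have Hd : 0 < dot (x - y) (s i) by move: Hi; rewrite pmulr_rgt0 // ltr0n.
rewrite dotBl in Hd.
have [Hxs|Hxs] := ltrP 0 (dot x (s i)).
  have [Exs|Nxs] := eqVneq x (s i).
    exfalso.
    have : cn (fun l => cy l + c l)%N = cn (fun l => (l == i : nat)).
      by rewrite cnD -Ey' -Ec' cn_simple addrC subrK.
    move/cn_inj => H; apply: (Phi_neq0 Hy); rewrite Ey' cn_zero // => l.
    have := H l; case: eqP => [->|_] /=.
      by move: ci; case: (c i) => // m _; lia.
    by move/eqP; rewrite addn_eq0 => /andP [/eqP].
  have Hz := K_Phi Hx (simple_Phi i) Hxs Nxs.
  have Ez : x - s i - y = cn (fun l => c l - (l == i))%N by rewrite cnB1 // -Ec' addrAC.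
  have [Ezy|Nzy] := eqVneq (x - s i) y.
    by exists i; rewrite -Ezy subrK.
  exfalso; apply: Nz; exists (x - s i); split.
  - split=> //; apply: (@nncI _ (fun l => cy l + (c l - (l == i)))%N).
    by rewrite (cnD cy (fun l => c l - (l == i))%N) -Ez -Ey' [y + _]addrC subrK.
  - by split; [exists (fun l => c l - (l == i))%N | move=> E; rewrite E eqxx in Nzy].
  - split; first by apply: (@nncI _ (fun l => (l == i : nat))); rewrite cn_simple opprB addrC subrK.
    by move/eqP; rewrite subr_eq addrC -subr_eq subrr eq_sym => /eqP/simple_neq0.
have Hys : dot y (s i) < 0 by lra.
have Nys : y != - s i by apply/eqP; rewrite Ey'; apply: cn_neq_neg.
have Hz := Kp_Phi Hy (simple_Phi i) Hys Nys.
have [Ezx|Nzx] := eqVneq (y + s i) x.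
  by exists i; rewrite Ezx.
exfalso; apply: Nz; exists (y + s i); split.
- split=> //; apply: (@nncI _ (fun l => cy l + (l == i))%N).
  by rewrite (cnD cy (fun l => (l == i : nat))) -Ey' cn_simple.
- split; first by apply: (@nncI _ (fun l => (l == i : nat))); rewrite cn_simple addrAC subrr add0r.
  by move/eqP; rewrite -subr_eq0 opprD addrA subrr sub0r oppr_eq0 => /eqP/simple_neq0.
- split; first by apply: (@nncI _ (fun l => c l - (l == i))%N); rewrite cnB1 // -Ec' opprD addrA.
  by move=> E; rewrite E eqxx in Nzx.
Qed.


Lemma L2 a b r q : a \in Phi -> b \in Phi -> dot a b <= 0 -> r \in Phi -> q \in Phi ->
  r + a \in Phi -> q = r + a - b -> r - q \notin Phi -> r != q -> r != b -> q != a ->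
  r - b \in Phi.
Proof.
move=> Ha Hb Hab Hr Hq Hj Eq Nrq Drq Drb Dqa.
have [H1|H1] := ltrP 0 (dot r b); first exact: K_Phi.
have [H2|H2] := ltrP 0 (dot q a).
  have := K_Phi Hq Ha H2 Dqa; suff -> : q - a = r - b by []; rewrite Eq addrAC addrK //.
exfalso; move/negP: Nrq; apply; apply: K_Phi => //.
have Pj := dot_gt0 Hj.
move: H1 Hab H2 Pj; rewrite Eq ?(dotBl, dotDl, dotBr, dotDr, dotNl, dotNr).
rewrite ?(dotC b a) ?(dotC a r) ?(dotC b r) => H1 Hab H2 Pj; lra.
Qed.

Lemma L1 a b p q : a \in Phi -> b \in Phi -> dot a b <= 0 -> p \in Phi -> q \in Phi ->
  p - a \in Phi -> q = p - a + b -> p - q \notin Phi -> p != q -> p != - b -> q != - a ->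
  p + b \in Phi.
Proof.
move=> Ha Hb Hab Hp Hq Hm Eq Npq Dpq Dpb Dqa.
have [H1|H1] := ltrP (dot p b) 0; first exact: Kp_Phi.
have [H2|H2] := ltrP (dot q a) 0.
  have := Kp_Phi Hq Ha H2 Dqa; suff -> : q + a = p + b by []; rewrite Eq addrAC subrK //.
exfalso; move/negP: Npq; apply; apply: K_Phi => //.
have Pm := dot_gt0 Hm.
move: H1 Hab H2 Pm; rewrite Eq ?(dotBl, dotDl, dotBr, dotDr, dotNl, dotNr).
rewrite ?(dotC b a) ?(dotC a p) ?(dotC b p) => H1 Hab H2 Pm; lra.
Qed.


Lemma rle_refl x : rle s x x.
Proof. by apply: (@nncI _ (fun _ => 0%N)); rewrite subrr cn0. Qed.

Lemma rle_simple x y k : y = x + s k -> rle s x y.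
Proof. by move=> ->; apply: (@nncI _ (fun l => (l == k : nat))); rewrite cn_simple addrAC subrr add0r. Qed.

Lemma pos_add x k : pos_root Phi s x -> x + s k \in Phi -> pos_root Phi s (x + s k).
Proof.
move=> [_ [c Ec]] H; split=> //; apply: (@nncI _ (fun l => c l + (l == k))%N).
by rewrite (cnD c (fun l => (l == k : nat))) cn_simple; congr (_ + _).
Qed.

Lemma part1 eta1 eta2 j : pos_root Phi s eta1 -> pos_root Phi s eta2 ->
  is_join Phi s eta1 eta2 j -> covers Phi s j eta1 -> covers Phi s j eta2 ->
  (exists i k, [/\ adjacent s i k, j = s i + s k & j = eta1 + eta2])
  \/ (exists m, [/\ is_meet Phi s eta1 eta2 m, covers Phi s eta1 m & covers Phi s eta2 m]).
Proof.
move=> P1 P2 [Pj _ _ Jl] C1 C2.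
have [i Ei] := cover_simple C1.
have [k Ek] := cover_simple C2.
have N12 : eta1 != eta2.
  apply/eqP => E; have [c Ec] := Jl eta1 P1 (rle_refl _) ltac:(rewrite -E; exact: rle_refl).
  apply: (@cn_neq_neg c i); rewrite -[cn c]Ec Ei.
  by rewrite opprD addrA subrr add0r.
have Nik : i != k.
  apply: contra N12 => /eqP Eik; apply/eqP; apply: (addIr (s i)); rewrite -Ei Ek Eik //.
have Nki : k != i by rewrite eq_sym.
have Hj := Pj.1.
have [Ej|Nj] := eqVneq j (s i + s k).
  left; exists i, k; split=> //.
    split=> //; apply/eqP => D0.
    have := refl_Phi (simple_Phi i) Hj.
    have Pi := dot_gt0 (simple_Phi i).
    have -> : cartan j (s i) = 2.
      rewrite /cartan Ej dotDl (dotC (s k)) D0 addr0 mulfK //.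
      by apply/eqP => E; rewrite E ltxx in Pi.
    rewrite Ej -addrA (addrC (s k)) addrA scaler_nat mulr2n opprD addrA subrr add0r.
    by rewrite addrC; apply/negP; exact: diff_simple_notin.
  have E1 : eta1 = s k by apply: (addIr (s i)); rewrite -Ei Ej addrC.
  have E2 : eta2 = s i by apply: (addIr (s k)); rewrite -Ek Ej.
  by rewrite E1 E2 addrC.
right.
have Eq : eta2 = eta1 + s i - s k by rewrite -Ei Ek addrK.
have Hm : eta1 - s k \in Phi.
  apply: (@L2 (s i) (s k) eta1 eta2) => //.
  - exact: simple_Phi.
  - exact: simple_Phi.
  - exact: dot_simple_le0.
  - exact: P1.1.
  - exact: P2.1.
  - by rewrite -Ei.
  - rewrite Eq opprD opprK opprD !addrA subrr add0r addrC; exact: diff_simple_notin.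
  - by apply: contra Nj => /eqP E; rewrite Ei E addrC.
  - by apply: contra Nj => /eqP E; rewrite Ek E.
set m := eta1 - s k.
have E1 : eta1 = m + s k by rewrite subrK.
have E2 : eta2 = m + s i by rewrite Eq /m addrAC.
have [_ [c1 Ec1]] := P1. have [_ [c2 Ec2]] := P2.
have [d Ed] := @two_cover m c1 c2 i k Nik (etrans (esym E1) Ec1) (etrans (esym E2) Ec2).
have Pm : pos_root Phi s m by split=> //; exists d.
exists m; split.
- split=> //; [exact: rle_simple E1 | exact: rle_simple E2|].
  move=> kk Pk [a Ea] [b Eb].
  have [dd Edd] := @two_cover (m - kk) a b i k Nik
     ltac:(rewrite addrAC -E1; exact: Ea) ltac:(rewrite addrAC -E2; exact: Eb).
  by exists dd.
- exact: simple_cover E1.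
- exact: simple_cover E2.
Qed.

Lemma part2 eta1 eta2 m : pos_root Phi s eta1 -> pos_root Phi s eta2 ->
  is_meet Phi s eta1 eta2 m -> covers Phi s eta1 m -> covers Phi s eta2 m ->
  exists j, [/\ is_join Phi s eta1 eta2 j, covers Phi s j eta1 & covers Phi s j eta2].
Proof.
move=> P1 P2 [Pm _ _ Ml] C1 C2.
have [i Ei] := cover_simple C1.
have [k Ek] := cover_simple C2.
have N12 : eta1 != eta2.
  apply/eqP => E; have [c Ec] := Ml eta1 P1 (rle_refl _) ltac:(rewrite -E; exact: rle_refl).
  apply: (@cn_neq_neg c i); rewrite -[cn c]Ec Ei.
  by rewrite opprD addrA subrr add0r.
have Nik : i != k.
  by apply: contra N12 => /eqP Eik; apply/eqP; rewrite Ei Ek Eik.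
have [_ [c1 Ec1]] := P1. have [_ [c2 Ec2]] := P2.
have Hj : eta1 + s k \in Phi.
  apply: (@L1 (s i) (s k) eta1 eta2) => //.
  - exact: simple_Phi.
  - exact: simple_Phi.
  - exact: dot_simple_le0.
  - exact: P1.1.
  - exact: P2.1.
  - by rewrite Ei addrK; exact: Pm.1.
  - by rewrite Ei addrK.
  - by rewrite Ei Ek opprD addrA [m + _]addrC addrK; exact: diff_simple_notin.
  - by apply/eqP; rewrite Ec1; apply: cn_neq_neg.
  - by apply/eqP; rewrite Ec2; apply: cn_neq_neg.
set j := eta1 + s k.
have J1 : j = eta1 + s k by [].
have J2 : j = eta2 + s i by rewrite /j Ei Ek addrAC.
have Pj := pos_add P1 Hj.
exists j; split.
- split=> //; [exact: rle_simple J1 | exact: rle_simple J2|].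
  move=> kk Pk [a Ea] [b Eb].
  have [dd Edd] := @two_cover (kk - j) a b i k Nik
     ltac:(rewrite J1 opprD addrA subrK; exact: Ea) ltac:(rewrite J2 opprD addrA subrK; exact: Eb).
  by exists dd.
- exact: simple_cover J1.
- exact: simple_cover J2.
Qed.

End Aux.

Theorem proposition2p4 (R : realType) (n : nat) (Phi : seq 'rV[R]_n)
    (simple : 'I_n -> 'rV[R]_n) (eta1 eta2 : 'rV[R]_n) :
  reduced_root_system Phi -> irreducible_rs Phi -> is_base Phi simple ->
  pos_root Phi simple eta1 -> pos_root Phi simple eta2 ->
  (forall j, is_join Phi simple eta1 eta2 j ->
     covers Phi simple j eta1 -> covers Phi simple j eta2 ->
     (exists i k, [/\ adjacent simple i k, j = simple i + simple k
                    & j = eta1 + eta2])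
     \/ (exists m, [/\ is_meet Phi simple eta1 eta2 m,
                       covers Phi simple eta1 m & covers Phi simple eta2 m]))
  /\
  (forall m, is_meet Phi simple eta1 eta2 m ->
     covers Phi simple eta1 m -> covers Phi simple eta2 m ->
     exists j, [/\ is_join Phi simple eta1 eta2 j,
                   covers Phi simple j eta1 & covers Phi simple j eta2]).
Proof.
move=> HR _ HB P1 P2; split.
- by move=> j; apply: part1.
- by move=> m; apply: part2.
Qed.
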